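(* Consider the Cannings model described in the context. For $r\in\mathbb{N}$, $k_1,\dots,k_r\ge2$ and $N>k_1+\cdots+k_r$, $$\frac{E[(\nu_{1,N})_{k_1}\cdots(\nu_{r,N})_{k_r}]}{(N)_{k_1+\cdots+k_r}}=E\Big[\frac{(X_{1,N})_{k_1}\cdots(X_{r,N})_{k_r}}{(S_N)_{k_1+\cdots+k_r}}\Big].$$ In particular, $$c_N:=\frac{E[(\nu_{1,N})_2]}{N-1}=N\,E\Big[\frac{X_{1,N}(X_{1,N}-1)}{S_N(S_N-1)}\Big].$$ Moreover, $c_N\ge\frac{\mathbb{P}(X_{1,N}\ge2)^2}{2N}$.
   Context: Cannings model with i.i.d. offspring numbers and sampling: for each $N$, let $X_{1,N},\dots,X_{N,N}$ be i.i.d. random variables with values in $\{1,2,\dots\}$ (the number of offspring of the $N$ individuals of a generation), and $S_N=X_{1,N}+\cdots+X_{N,N}$. Conditionally on these, $N$ of the $S_N$ offspring are sampled uniformly at random without replacement to form the next generation, and $\nu_{k,N}$ denotes the number of sampled offspring of the $k$th individual (so $\sum_k\nu_{k,N}=N$). This is repeated independently in each generation. $(x)_k=x(x-1)\cdots(x-k+1)$ denotes the falling factorial. *)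

(* Defs.v *)
(* Discrete rendering of the Cannings
   model: the law of (X_{1,N},...,X_{N,N}, nu_{1,N},...,nu_{N,N}) is written
   down explicitly, and expectations of nonnegative functionals are
   (extended-real) sums against this joint probability mass function. *)
From HB Require Import structures.
From mathcomp Require Import all_boot all_order all_algebra.
From mathcomp Require Import all_classical all_reals all_analysis.
Set Implicit Arguments. Unset Strict Implicit. Unset Printing Implicit Defensive.
Import Order.TTheory GRing.Theory Num.Theory.
Local Open Scope ring_scope.

Definition offspring_law (R : realType) (p : nat -> R) : Prop :=
  [/\ forall m, 0 <= p m, p 0%N = 0 & (\esum_(m in setT) (p m)%:E = 1)%E].

(* the j-th coordinate (0-based) of a configuration, 0 if out of range *)
Definition indiv (N : nat) (x : {ffun 'I_N -> nat}) (j : nat) : nat :=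
  if @insub nat (fun i => i < N)%N 'I_N j is Some i then x i else 0%N.

Definition sum_offspring (N : nat) (x : {ffun 'I_N -> nat}) : nat := (\sum_i x i)%N.

(* Conditional law of (nu_1,...,nu_N) given (X_1,...,X_N) = x: sampling N of
   the S = x_1+...+x_N offspring uniformly without replacement
   (multivariate hypergeometric law). *)
Definition sample_law (R : realType) (N : nat) (x n : {ffun 'I_N -> nat}) : R :=
  if (\sum_i n i == N)%N
  then (\prod_i 'C(x i, n i))%:R / 'C(sum_offspring x, N)%:R
  else 0.

Definition cannings_pmf (R : realType) (N : nat) (p : nat -> R)
  (x n : {ffun 'I_N -> nat}) : R :=
  (\prod_i p (x i)) * sample_law R x n.

Definition cannings_E (R : realType) (N : nat) (p : nat -> R)
  (f : {ffun 'I_N -> nat} -> {ffun 'I_N -> nat} -> \bar R) : \bar R :=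
  (\esum_(xn in [set: {ffun 'I_N -> nat} * {ffun 'I_N -> nat}])
     (cannings_pmf p xn.1 xn.2)%:E * f xn.1 xn.2)%E.

Definition coal_prob (R : realType) (N : nat) (p : nat -> R) : \bar R :=
  (@cannings_E R N p (fun x n => ((indiv n 0) ^_ 2)%:R%:E) * ((N.-1)%:R^-1)%:E)%E.

Definition prob_ge2 (R : realType) (p : nat -> R) : \bar R :=
  (\esum_(m in [set m : nat | (2 <= m)%N]) (p m)%:E)%E.

(* Main.v *)
Require Import Defs.
From HB Require Import structures.
From mathcomp Require Import all_boot all_order all_algebra.
From mathcomp Require Import all_classical all_reals all_analysis.
From mathcomp Require Import zify ring lra perm.
Import Order.TTheory GRing.Theory Num.Theory.
Local Open Scope ring_scope.

Lemma ffact_split (x k t : nat) : (k <= t <= x)%N ->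
  (x ^_ t = x ^_ k * (x - k) ^_ (t - k))%N.
Proof.
move=> /andP[kt tx].
have tpos : (0 < (x - t)`!)%N by apply: fact_gt0.
apply/eqP; rewrite -(eqn_pmul2r tpos) ffact_fact // -mulnA.
have -> : (x - t = (x - k) - (t - k))%N by rewrite subnBA // subnK // (leq_trans kt).
rewrite ffact_fact; last by apply: leq_sub2r.
by rewrite ffact_fact // (leq_trans kt).
Qed.

Lemma bin_ffact_shift (x t k : nat) :
  ('C(x, t) * t ^_ k = x ^_ k * (if (t < k)%N then 0 else 'C(x - k, t - k)))%N.
Proof.
case: (ltnP t k) => tk; first by rewrite (ffact_small tk) !muln0.
case: (ltnP x k) => xk.
  by rewrite (ffact_small xk) bin_small ?mul0n // (leq_trans xk).
case: (ltnP x t) => xt.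
  rewrite (bin_small xt) mul0n (@bin_small (x - k)) ?muln0 //.
  by rewrite ltn_sub2r // (leq_trans _ xt).
have fpos : (0 < (t - k)`!)%N by apply: fact_gt0.
apply/eqP; rewrite -(eqn_pmul2r fpos) -mulnA ffact_fact // bin_ffact.
by rewrite -mulnA bin_ffact -ffact_split ?tk.
Qed.

Lemma coefXD1n (R : comNzRingType) (n j : nat) :
  (('X + 1 : {poly R}) ^+ n)`_j = 'C(n, j)%:R.
Proof.
rewrite exprD1n coef_sum.
under eq_bigr do rewrite coefMn coefXn.
case: (ltnP n j) => nj.
  rewrite bin_small // big1 // => i _.
  have -> : (j == i) = false by apply/negbTE; rewrite neq_ltn (leq_trans (ltn_ord i) nj) orbT.
  by rewrite mul0rn.
rewrite (bigD1 (Ordinal (nj : (j < n.+1)%N))) //= eqxx mulr1n big1 ?addr0 //.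
by move=> i /negbTE; rewrite eq_sym -val_eqE /= => ->; rewrite mul0rn.
Qed.

Section Comb.
Variable R : comNzRingType.

Lemma factor_poly (B x k : nat) : (x < B)%N ->
  \sum_(j < B) ('C(x, j) * j ^_ k)%:R *: ('X^j : {poly R})
  = (x ^_ k)%:R *: ('X^k * ('X + 1) ^+ (x - k)).
Proof.
move=> xB; apply/polyP => t.
rewrite coef_sum coefZ coefXnM.
under eq_bigr do rewrite coefZ coefXn.
have -> : \sum_(j < B) ('C(x, j) * j ^_ k)%:R * (t == j)%:R
          = ('C(x, t) * t ^_ k)%:R :> R.
  case: (ltnP t B) => tB.
    rewrite (bigD1 (Ordinal tB)) //= eqxx mulr1 big1 ?addr0 // => i.
    by rewrite -val_eqE /= eq_sym => /negbTE ->; rewrite mulr0.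
  rewrite bin_small ?mul0n ?big1 // ?(leq_trans xB) // => i _.
  have -> : (t == i) = false by apply/negbTE; rewrite neq_ltn (leq_trans (ltn_ord i) tB) orbT.
  by rewrite mulr0.
rewrite bin_ffact_shift natrM; case: ltnP => _; first by rewrite mulr0.
by rewrite coefXD1n.
Qed.

Lemma vdm (N B : nat) (x : 'I_N -> nat) (kk : 'I_N -> nat) :
  (forall i, x i < B)%N -> (\sum_i kk i <= N)%N ->
  \sum_(m : {ffun 'I_N -> 'I_B}) ((\sum_i (m i : nat) == N)%:R *
      \prod_i ('C(x i, m i) * (m i) ^_ (kk i))%:R : R)
  = (\prod_i (x i) ^_ (kk i) * 'C(\sum_i x i - \sum_i kk i, N - \sum_i kk i))%:R.
Proof.
move=> xB KN.
pose F i (j : 'I_B) := ('C(x i, j) * j ^_ (kk i))%:R *: ('X^j : {poly R}).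
have H1 : \prod_i \sum_(j < B) F i j =
   \sum_(m : {ffun 'I_N -> 'I_B}) (\prod_i ('C(x i, m i) * (m i) ^_ (kk i))%:R) *: 'X^(\sum_i (m i : nat)).
  rewrite bigA_distr_bigA /=; apply: eq_bigr => m _.
  rewrite /F; under eq_bigr do rewrite -mul_polyC.
  by rewrite big_split /= -rmorph_prod prodrXr mul_polyC.
have H2 : \prod_i \sum_(j < B) F i j =
   (\prod_i (x i) ^_ (kk i))%:R *: ('X^(\sum_i kk i) * ('X + 1) ^+ (\sum_i (x i - kk i))).
  rewrite /F; under eq_bigr do rewrite factor_poly // -mul_polyC.
  by rewrite big_split /= -rmorph_prod big_split /= prodrXr prodrXr mul_polyC natr_prod.
have := congr1 (fun p : {poly R} => p`_N) (etrans (esym H1) H2).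
rewrite coef_sum /= coefZ coefXnM ltnNge KN /= coefXD1n.
under eq_bigr do rewrite coefZ coefXn eq_sym mulrC.
move=> ->; rewrite natrM.
case: (boolP [forall i, kk i <= x i]%N) => [/forallP allk | /forallPn [i0 hi0]].
  congr (_ * _%:R); congr 'C(_, _).
  apply/eqP; rewrite -(eqn_add2r (\sum_i kk i)) subnK; last by apply: leq_sum => i _; apply: allk.
  by rewrite -big_split /=; apply/eqP; apply: eq_bigr => i _; rewrite subnK.
rewrite -ltnNge in hi0.
by rewrite (bigD1 i0) //= (ffact_small hi0) mul0n /= !mul0r.
Qed.
End Comb.

Section EsumLemmas.
Variable R : realType.
Local Open Scope ereal_scope.

Lemma esumZl (T : choiceType) (S : set T) (a : T -> \bar R) (r : R) :
  (0 <= r)%R -> (forall i, 0 <= a i) ->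
  \esum_(i in S) (r%:E * a i) = r%:E * \esum_(i in S) a i.
Proof.
move=> r0 a0; rewrite /esum -ereal_supZl //; last first.
  by apply/set0P; exists 0; exists set0 => //; [exact: fsets_set0 | rewrite fsbig_set0].
congr ereal_sup; apply/seteqP; split => y /=.
  move=> [A AS <-]; exists (\sum_(x \in A) a x); first by exists A.
  by rewrite ge0_mule_fsumr.
move=> [z [A AS <-] <-]; exists A => //.
by rewrite ge0_mule_fsumr.
Qed.

Lemma esumZr (T : choiceType) (S : set T) (a : T -> \bar R) (r : R) :
  (0 <= r)%R -> (forall i, 0 <= a i) ->
  \esum_(i in S) (a i * r%:E) = (\esum_(i in S) a i) * r%:E.
Proof.
move=> r0 a0; rewrite muleC -esumZl //; apply: eq_esum => i _; exact: muleC.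
Qed.

Lemma esum_delta (T : choiceType) (c : T) (v : \bar R) : 0 <= v ->
  \esum_(n in [set: T]) (if n == c then v else 0) = v.
Proof.
move=> v0; transitivity (\esum_(n in [set c]) v); last exact: esum_set1.
by rewrite [RHS]esum_mkcond; apply: eq_esum => n _; rewrite in_set1.
Qed.

Lemma esum_pair (T1 T2 : choiceType) (a : T1 -> T2 -> \bar R) :
  (forall i j, 0 <= a i j) ->
  \esum_(k in [set: T1 * T2]) a k.1 k.2 = \esum_(i in [set: T1]) \esum_(j in [set: T2]) a i j.
Proof.
move=> a0; rewrite esum_esum //.
by congr esum; apply/seteqP; split => // -[i j].
Qed.

End EsumLemmas.

Section Main.
Variables (R : realType) (N : nat) (p : nat -> R).
Hypothesis p0 : forall m, 0 <= p m.
Hypothesis pz : p 0%N = 0.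

Definition w (x : {ffun 'I_N -> nat}) : R := \prod_i p (x i).
Definition emb B (m : {ffun 'I_N -> 'I_B}) : {ffun 'I_N -> nat} := [ffun i => val (m i)].

Arguments emb {B}.

Lemma w_ge0 x : 0 <= w x.
Proof. by apply: prodr_ge0 => i _. Qed.

Lemma sample_law_ge0 (x n : {ffun 'I_N -> nat}) : 0 <= sample_law R x n.
Proof. by rewrite /sample_law; case: ifP => // _; apply: divr_ge0. Qed.

Lemma indiv_ord (n : {ffun 'I_N -> nat}) (i : 'I_N) : indiv n i = n i.
Proof. by rewrite /indiv valK. Qed.

Lemma w_supp x : w x != 0 -> (forall i, 0 < x i)%N /\ (N <= sum_offspring x)%N.
Proof.
move=> wx.
have pos : forall i, (0 < x i)%N.
  move=> i; rewrite lt0n; apply/negP => /eqP xi; move: wx.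
  by rewrite /w (bigD1 i) //= xi pz mul0r eqxx.
split => //; rewrite /sum_offspring.
apply: (@leq_trans (\sum_(i < N) 1)%N); first by rewrite sum_nat_const card_ord muln1.
by apply: leq_sum => i _; apply: pos.
Qed.

Lemma emb_inj B : injective (@emb B).
Proof.
move=> m1 m2 e; apply/ffunP => i; apply: val_inj.
by have := congr1 (fun f : {ffun 'I_N -> nat} => f i) e; rewrite /= !ffunE.
Qed.

Lemma inner_fin B (NB : (N < B)%N) x (g : {ffun 'I_N -> nat} -> R) :
  (forall n, 0 <= g n) ->
  (\esum_(n in [set: {ffun 'I_N -> nat}]) (sample_law R x n * g n)%:E
  = (\sum_(m : {ffun 'I_N -> 'I_B}) sample_law R x (emb m) * g (emb m))%:E)%E.
Proof.
move=> g0.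
have pw : forall n, (sample_law R x n * g n)%:E =
  (\sum_(m : {ffun 'I_N -> 'I_B}) (if n == emb m then (sample_law R x (emb m) * g (emb m))%:E else 0))%E.
  move=> n.
  case: (boolP (sample_law R x n == 0)) => [/eqP L0 | Ln].
    rewrite L0 mul0r big1 // => m _; case: eqP => // <-.
    by rewrite L0 mul0r.
  have sN : (\sum_i n i == N)%N by move: Ln; rewrite /sample_law; case: ifP => //; rewrite eqxx.
  have nB : forall i, (n i < B)%N.
    move=> i; apply: leq_ltn_trans NB; apply: (@leq_trans (\sum_i n i)); last by rewrite (eqP sN).
    by rewrite (bigD1 i) //= leq_addr.
  pose m0 : {ffun 'I_N -> 'I_B} := [ffun i => Ordinal (nB i)].
  have em0 : n = emb m0 by apply/ffunP => i; rewrite !ffunE.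
  rewrite (bigD1 m0) //= -em0 eqxx big1 ?adde0 // => m mm0.
  case: eqP => // e; move: mm0; rewrite em0 in e.
  by move/emb_inj: e => ->; rewrite eqxx.
rewrite (eq_esum (fun n _ => pw n)) esum_sum; last first.
  move=> n m _ _; case: ifP => // _; rewrite lee_fin; apply: mulr_ge0 => //.
  exact: sample_law_ge0.
rewrite -sumEFin; apply: eq_bigr => m _; apply: esum_delta.
by rewrite lee_fin; apply: mulr_ge0 => //; exact: sample_law_ge0.
Qed.

Lemma cE_decomp (g : {ffun 'I_N -> nat} -> {ffun 'I_N -> nat} -> R) :
  (forall x n, 0 <= g x n) ->
  cannings_E p (fun x n => (g x n)%:E) =
  (\esum_(x in [set: {ffun 'I_N -> nat}]) ((w x)%:E *
      \esum_(n in [set: {ffun 'I_N -> nat}]) (sample_law R x n * g x n)%:E))%E.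
Proof.
move=> g0; rewrite /cannings_E.
rewrite (@esum_pair R _ _ (fun x n => (cannings_pmf p x n)%:E * (g x n)%:E)%E); last first.
  move=> x n; rewrite -EFinM lee_fin; apply: mulr_ge0 => //; apply: mulr_ge0.
    exact: w_ge0.
  exact: sample_law_ge0.
apply: eq_esum => x _; rewrite -esumZl; last 2 first.
- exact: w_ge0.
- by move=> n; rewrite lee_fin; apply: mulr_ge0 => //; exact: sample_law_ge0.
by apply: eq_esum => n _; rewrite -!EFinM /cannings_pmf mulrA.
Qed.


Lemma inner_moment x (kn : nat -> nat) :
  (\sum_(j < N) kn j <= N)%N -> (N <= sum_offspring x)%N ->
  \sum_(m : {ffun 'I_N -> 'I_((sum_offspring x + N).+1)})
     sample_law R x (emb m) * (\prod_(j < N) (indiv (emb m) j) ^_ (kn j))%:R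
  = (\prod_(j < N) (indiv x j) ^_ (kn j) * N ^_ (\sum_(j < N) kn j))%:R
      / ((sum_offspring x) ^_ (\sum_(j < N) kn j))%:R.
Proof.
move=> KN SN.
set S := sum_offspring x; set K := (\sum_(j < N) kn j)%N.
have xB : forall i, (x i < (S + N).+1)%N.
  by move=> i; rewrite ltnS (leq_trans _ (leq_addr _ _)) // /S /sum_offspring (bigD1 i) //= leq_addr.
have := @vdm R N _ x (fun i => kn i) xB KN.
have -> : (\sum_i x i)%N = S by [].
move=> H.
transitivity ((\sum_(m : {ffun 'I_N -> 'I_((S + N).+1)})
   ((\sum_i (m i : nat) == N)%:R * \prod_i ('C(x i, m i) * (m i) ^_ (kn i))%:R : R)) / ('C(S, N)%:R : R)).
  rewrite mulr_suml; apply: eq_bigr => m _.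
  have -> : (\prod_(j < N) indiv [ffun i => (m i : nat)] j ^_ (kn j))%N = (\prod_(j < N) (m j) ^_ (kn j))%N.
    by apply: eq_bigr => j _; rewrite indiv_ord ffunE.
  rewrite /sample_law /emb.
  have -> : (\sum_i [ffun i => (m i : nat)] i = \sum_i (m i : nat))%N by apply: eq_bigr => i _; rewrite ffunE.
  have -> : (\prod_i 'C(x i, [ffun i => (m i : nat)] i) = \prod_i 'C(x i, m i))%N by apply: eq_bigr => i _; rewrite ffunE.
  case: ifP => _; last by rewrite !mul0r.
  rewrite mul1r mulrAC; congr (_ / _).
  by rewrite -natrM -big_split natr_prod.
rewrite H.
have Cpos : ('C(S, N)%:R != 0 :> R) by rewrite pnatr_eq0 -lt0n bin_gt0.
have Fpos : ((S ^_ K)%:R != 0 :> R) by rewrite pnatr_eq0 -lt0n ffact_gt0 (leq_trans KN).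
apply/eqP; rewrite eqr_div //; apply/eqP; rewrite -!natrM; congr (_%:R).
have -> : (\prod_(j < N) indiv x j ^_ kn j = \prod_i x i ^_ kn i)%N.
  by apply: eq_bigr => j _; rewrite indiv_ord.
rewrite -!mulnA; congr (_ * _)%N.
have := bin_ffact_shift S N K; rewrite ltnNge KN /= => e.
by rewrite mulnC -/K -e mulnC.
Qed.

Lemma master (h : {ffun 'I_N -> nat} -> R) (kn : nat -> nat) :
  (forall x, 0 <= h x) -> (\sum_(j < N) kn j <= N)%N ->
  cannings_E p (fun x n => (h x * (\prod_(j < N) (indiv n j) ^_ (kn j))%:R)%:E)
  = (\esum_(x in [set: {ffun 'I_N -> nat}])
      (w x * h x * ((\prod_(j < N) (indiv x j) ^_ (kn j) * N ^_ (\sum_(j < N) kn j))%:R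
      / ((sum_offspring x) ^_ (\sum_(j < N) kn j))%:R))%:E)%E.
Proof.
move=> h0 KN; rewrite cE_decomp; last by move=> x n; apply: mulr_ge0.
apply: eq_esum => x _.
case: (boolP (w x == 0)) => [/eqP -> | wx].
  by rewrite mul0e !mul0r.
have [_ SN] := w_supp x wx.
rewrite (@inner_fin ((sum_offspring x) + N).+1); last first.
- by move=> n; apply: mulr_ge0.
- by rewrite ltnS leq_addl.
rewrite -EFinM -mulrA; congr (_ * _)%:E.
under eq_bigr do rewrite mulrCA.
by rewrite -mulr_sumr inner_moment // mulrA.
Qed.

End Main.

Section Fact.
Variable R : realType.

Definition econs n (my : nat * {ffun 'I_n -> nat}) : {ffun 'I_n.+1 -> nat} :=
  [ffun i : 'I_n.+1 => if unlift ord0 i is Some j then my.2 j else my.1].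

Arguments econs {n}.

Lemma econs0 n my : econs my (@ord0 n) = my.1.
Proof. by rewrite ffunE unlift_none. Qed.

Lemma econsS n my (j : 'I_n) : econs my (lift ord0 j) = my.2 j.
Proof. by rewrite ffunE liftK. Qed.

Lemma econs_bij n : bijective (@econs n).
Proof.
exists (fun x : {ffun 'I_n.+1 -> nat} => (x ord0, [ffun j => x (lift ord0 j)])).
  move=> [m y] /=; rewrite econs0; congr pair; apply/ffunP => j.
  by rewrite ffunE econsS.
move=> x; apply/ffunP => i; rewrite ffunE.
case: unliftP => [j ->|->] /=; first by rewrite ffunE.
by [].
Qed.

Lemma esum_ffun_prod (n : nat) (a : 'I_n -> nat -> R) (s : 'I_n -> R) :
  (forall i m, 0 <= a i m) ->
  (forall i, \esum_(m in [set: nat]) (a i m)%:E = (s i)%:E)%E ->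
  (\esum_(x in [set: {ffun 'I_n -> nat}]) (\prod_i a i (x i))%:E = (\prod_i s i)%:E)%E.
Proof.
elim: n a s => [|n IH] a s a0 es.
  rewrite big_ord0.
  have -> : [set: {ffun 'I_0 -> nat}]%classic = [set [ffun i => 0%N]]%classic.
    apply/seteqP; split => x // _; apply/ffunP => -[] //.
  by rewrite esum_set1 big_ord0.
have s0 : forall i, 0 <= s i.
  move=> i; rewrite -lee_fin -es; apply: esum_ge0 => m _; rewrite lee_fin; exact: a0.
rewrite (reindex_esum [set: nat * {ffun 'I_n -> nat}] _ (@econs n)); last first.
  by rewrite setTT_bijective; exact: econs_bij.
under eq_esum do rewrite big_ord_recl econs0 /=.
under eq_esum => my _ do under eq_bigr do rewrite econsS.
rewrite (@esum_pair R nat {ffun 'I_n -> nat} (fun m y => (a ord0 m * \prod_(i < n) a (lift ord0 i) (y i))%:E)); last first.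
  by move=> m y; rewrite lee_fin; apply: mulr_ge0 => //; apply: prodr_ge0.
under eq_esum => m _.
  rewrite (eq_esum (fun y _ => EFinM _ _)) esumZl //; last by move=> y; rewrite lee_fin; apply: prodr_ge0.
  rewrite (IH (fun i => a (lift ord0 i)) (fun i => s (lift ord0 i)) (fun i m => a0 _ m) (fun i => es _)).
  rewrite -EFinM.
  over.
rewrite (eq_esum (fun m _ => EFinM _ _)) esumZr //; last 2 first.
- by apply: prodr_ge0.
- by move=> m; rewrite lee_fin.
by rewrite es big_ord_recl -EFinM.
Qed.

End Fact.

Section X.
Variables (R : realType) (N : nat) (p : nat -> R).
Hypothesis p0 : forall m, 0 <= p m.
Hypothesis pz : p 0%N = 0.

Lemma cE_fun (h : {ffun 'I_N -> nat} -> R) : (forall x, 0 <= h x) ->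
  cannings_E p (fun x n => (h x)%:E) =
  (\esum_(x in [set: {ffun 'I_N -> nat}]) (w R N p x * h x)%:E)%E.
Proof.
move=> h0.
have -> : (fun x n : {ffun 'I_N -> nat} => (h x)%:E)
   = (fun x n => (h x * (\prod_(j < N) indiv n j ^_ ((fun=> 0%N) j))%:R : R)%:E).
  apply: funext => x; apply: funext => n.
  have -> : (\prod_(j < N) indiv n j ^_ 0 = 1)%N by apply: big1 => j _; exact: ffactn0.
  by rewrite mulr1.
rewrite (@master R N p p0 pz h (fun=> 0%N)) //; last by rewrite big1.
apply: eq_esum => x _; congr EFin.
have -> : (\prod_(j < N) indiv x j ^_ 0 = 1)%N by apply: big1 => j _; exact: ffactn0.
by rewrite big1_eq !ffactn0 divr1 mulr1.
Qed.

Definition permx (s : {perm 'I_N}) (x : {ffun 'I_N -> nat}) : {ffun 'I_N -> nat} :=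
  [ffun j => x (s j)].

Lemma w_perm s x : w R N p (permx s x) = w R N p x.
Proof.
rewrite /w [RHS](reindex_inj (@perm_inj _ s)) /=.
by apply: eq_bigr => j _; rewrite ffunE.
Qed.

Lemma S_perm s x : sum_offspring (permx s x) = sum_offspring x.
Proof.
rewrite /sum_offspring [RHS](reindex_inj (@perm_inj _ s)) /=.
by apply: eq_bigr => j _; rewrite ffunE.
Qed.

Definition hh (x : {ffun 'I_N -> nat}) (i : 'I_N) : R :=
  (x i * (x i).-1)%:R / (sum_offspring x * (sum_offspring x).-1)%:R.

Lemma exchange (i0 i : 'I_N) :
  (\esum_(x in [set: {ffun 'I_N -> nat}]) (w R N p x * hh x i0)%:E =
   \esum_(x in [set: {ffun 'I_N -> nat}]) (w R N p x * hh x i)%:E)%E.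
Proof.
pose s := tperm i0 i.
rewrite (reindex_esum [set: {ffun 'I_N -> nat}] _ (permx s)); last first.
  rewrite setTT_bijective; exists (permx s) => x; apply/ffunP => j;
  by rewrite !ffunE tpermK.
apply: eq_esum => x _; rewrite w_perm; congr (_ * _)%:E.
by rewrite /hh S_perm ffunE tpermL.
Qed.

End X.

Section INat.
Local Open Scope nat_scope.


Lemma cs_nat (N : nat) (y : 'I_N -> nat) :
  ((\sum_i y i) * (\sum_i y i) <= N * \sum_i y i * y i)%N.
Proof.
have E1 : (2 * ((\sum_i y i) * (\sum_i y i)) = \sum_i \sum_j 2 * (y i * y j))%N.
  rewrite big_distrl /= big_distrr /=; apply: eq_bigr => i _.
  by rewrite big_distrr /= big_distrr.
have E2 : (\sum_i \sum_(j : 'I_N) (y i * y i + y j * y j) = 2 * (N * \sum_i y i * y i))%N.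
  under eq_bigr => i _ do rewrite big_split /= sum_nat_const card_ord.
  rewrite big_split /= sum_nat_const card_ord -big_distrr /=.
  by rewrite mulnC; lia.
have : (2 * ((\sum_i y i) * (\sum_i y i)) <= 2 * (N * \sum_i y i * y i))%N.
  rewrite E1 -E2; apply: leq_sum => i _; apply: leq_sum => j _.
  case: (leqP (y i) (y j)) => h.
    by rewrite -(subnK h); set d := (y j - y i)%N; nia.
  by rewrite -(subnK (ltnW h)); set d := (y i - y j)%N; nia.
by rewrite leq_pmul2l.
Qed.

Lemma pointwise_nat (N : nat) (x : 'I_N -> nat) :
  (forall i, 0 < x i)%N ->
  ((\sum_i (1 < x i)) * ((\sum_i x i) * (\sum_i x i).-1) <=
     2 * N * N * \sum_i x i * (x i).-1)%N.
Proof.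
move=> xpos.
set M := (\sum_i (1 < x i))%N.
set T := (\sum_i (x i).-1)%N.
set Y2 := (\sum_i (x i).-1 * (x i).-1)%N.
have HS : (\sum_i x i = N + T)%N.
  rewrite /T -[X in (X + _)%N](card_ord N) -sum1_card -big_split /=.
  by apply: eq_bigr => i _; have := xpos i; lia.
have HQ : (\sum_i x i * (x i).-1 = Y2 + T)%N.
  rewrite /Y2 /T -big_split /=.
  by apply: eq_bigr => i _; have := xpos i; nia.
have MT : (M <= T)%N by apply: leq_sum => i _; have := xpos i; case: (x i) => [|[|k]].
have MN : (M <= N)%N.
  rewrite /M -[X in (_ <= X)%N](card_ord N) -sum1_card; apply: leq_sum => i _; by case: (1 < x i).
have CS : (T * T <= N * Y2)%N by apply: cs_nat.
rewrite HS HQ.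
have h1 : (M * ((N + T) * (N + T).-1) <= M * ((N + T) * (N + T)))%N.
  by apply: leq_mul => //; apply: leq_mul => //; apply: leq_pred.
apply: leq_trans h1 _.
have h2 : (M * (T * T) <= N * (N * Y2))%N.
  apply: (@leq_trans (M * (N * Y2))); first by apply: leq_mul.
  by apply: leq_mul.
have h3 : ((N + T) * (N + T) <= 2 * (N * N) + 2 * (T * T))%N.
  case: (leqP N T) => h.
    by rewrite -(subnK h); set d := (T - N)%N; nia.
  by rewrite -(subnK (ltnW h)); set d := (N - T)%N; nia.
have h4 : (M * (N * N) <= T * (N * N))%N by apply: leq_mul.
apply: (@leq_trans (M * (2 * (N * N) + 2 * (T * T)))); first by apply: leq_mul.
nia.
Qed.

End INat.

Definition kext (r : nat) (k : 'I_r -> nat) (j : nat) : nat :=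
  if @insub nat (fun i => i < r)%N 'I_r j is Some j' then k j' else 0%N.

Arguments kext {r}.

Lemma kext_prod (r N : nat) (k : 'I_r -> nat) (F : nat -> nat -> nat) :
  (r <= N)%N -> (forall j, F j 0%N = 1%N) ->
  (\prod_(j < r) F j (k j) = \prod_(j < N) F j (kext k j))%N.
Proof.
move=> rN F0.
have -> : (\prod_(j < r) F j (k j) = \prod_(j < r) F j (kext k j))%N.
  by apply: eq_bigr => j _; rewrite /kext valK.
rewrite (big_ord_widen N (fun j => F j (kext k j))) // big_mkcond /=.
apply: eq_bigr => j _; case: ifP => // jr.
by rewrite /kext insubF // F0.
Qed.

Lemma kext_sum (r : nat) (N : nat) (k : 'I_r -> nat) :
  (r <= N)%N -> (\sum_(j < r) k j = \sum_(j < N) kext k j)%N.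
Proof.
move=> rN.
have -> : (\sum_(j < r) k j = \sum_(j < r) kext k j)%N.
  by apply: eq_bigr => j _; rewrite /kext valK.
rewrite (big_ord_widen N (fun j => kext k j)) // big_mkcond /=.
apply: eq_bigr => j _; case: ifP => // jr.
by rewrite /kext insubF.
Qed.

Lemma part1 (R : realType) (N : nat) (p : nat -> R) :
  offspring_law p ->
  (forall (r : nat) (k : 'I_r -> nat),
     (forall j, 2 <= k j)%N -> (\sum_j k j < N)%N ->
     (@cannings_E R N p (fun x n => (\prod_(j < r) (indiv n j) ^_ (k j))%:R%:E)
        * ((N ^_ (\sum_j k j))%:R^-1)%:E
      = @cannings_E R N p (fun x n =>
          ((\prod_(j < r) (indiv x j) ^_ (k j))%:R
           / ((sum_offspring x) ^_ (\sum_j k j))%:R)%:E))%E).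
Proof.
move=> [p0 pz _] r k k2 KN.
have rN : (r <= N)%N.
  apply: ltnW; apply: leq_ltn_trans KN.
  apply: (@leq_trans (\sum_(j < r) 1)%N); first by rewrite sum_nat_const card_ord muln1.
  by apply: leq_sum => j _; apply: leq_trans (k2 j).
have KN' : (\sum_(j < N) kext k j <= N)%N by rewrite -kext_sum // ltnW.
rewrite (@kext_sum r N k rN).
have -> : (fun x n : {ffun 'I_N -> nat} => ((\prod_(j < r) indiv n j ^_ k j)%:R : R)%:E)
   = (fun x n => (1 * (\prod_(j < N) indiv n j ^_ (kext k j))%:R : R)%:E).
  apply: funext => x; apply: funext => n.
  by rewrite mul1r (@kext_prod r N k (fun j m => indiv n j ^_ m)) // => j; rewrite ffactn0.
rewrite master //.
set K := (\sum_(j < N) kext k j)%N.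
have -> : (fun x n : {ffun 'I_N -> nat} => ((\prod_(j < r) indiv x j ^_ k j)%:R / ((sum_offspring x) ^_ K)%:R : R)%:E)
   = (fun x n => (((\prod_(j < N) indiv x j ^_ (kext k j))%:R / ((sum_offspring x) ^_ K)%:R) *
        (\prod_(j < N) indiv n j ^_ ((fun=> 0%N) j))%:R : R)%:E).
  apply: funext => x; apply: funext => n.
  rewrite (@kext_prod r N k (fun j m => indiv x j ^_ m)) //.
  have -> : (\prod_(j < N) indiv n j ^_ 0 = 1)%N by apply: big1 => j _; exact: ffactn0.
  by rewrite mulr1.
rewrite (@master R N p p0 pz (fun x => (\prod_(j < N) indiv x j ^_ kext k j)%:R / ((sum_offspring x) ^_ K)%:R) (fun=> 0%N)); last 2 first.
- by move=> x; apply: divr_ge0.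
- by rewrite big1.
rewrite -esumZr; last 2 first.
- by rewrite invr_ge0.
- move=> x; rewrite lee_fin; apply: mulr_ge0; first by apply: mulr_ge0 => //; exact: w_ge0.
  by apply: divr_ge0.
apply: eq_esum => x _; rewrite -EFinM; congr EFin.
have -> : (\prod_(j < N) indiv x j ^_ 0 = 1)%N by apply: big1 => j _; exact: ffactn0.
rewrite big1_eq !ffactn0 mul1n mulr1 divr1 natrM.
have NK : ((N ^_ K)%:R != 0 :> R) by rewrite pnatr_eq0 -lt0n ffact_gt0.
rewrite mulr1 -!mulrA; congr (_ * _).
by rewrite [X in _ * X = _]mulrCA mulfV // mulr1.
Qed.

Ltac pos := repeat (first [done | apply: mulr_ge0 | apply: divr_ge0 | apply: w_ge0 | apply: invr_ge0]).

Lemma part2 (R : realType) (N : nat) (p : nat -> R) :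
  offspring_law p -> (1 < N)%N ->
      @coal_prob R N p
      = (N%:R%:E * @cannings_E R N p (fun x n =>
          ((indiv x 0 * (indiv x 0).-1)%:R
           / (sum_offspring x * (sum_offspring x).-1)%:R)%:E))%E.
Proof.
move=> [p0 pz _] N1.
pose kn := fun j : nat => if j == 0%N then 2%N else 0%N.
have Ksum : (\sum_(j < N) kn j = 2)%N.
  case: N N1 {p0 pz p} => [//|N'] _; rewrite big_ord_recl /= big1 // => j _.
have Kprod : forall n : {ffun 'I_N -> nat}, (\prod_(j < N) indiv n j ^_ kn j = (indiv n 0) ^_ 2)%N.
  move=> n; case: N N1 n {p0 pz p Ksum} => [//|N'] _ n; rewrite big_ord_recl /= big1 ?muln1 // => j _.
rewrite /coal_prob.
have -> : (fun x n : {ffun 'I_N -> nat} => (((indiv n 0) ^_ 2)%:R : R)%:E)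
   = (fun x n => (1 * (\prod_(j < N) indiv n j ^_ (kn j))%:R : R)%:E).
  by apply: funext => x; apply: funext => n; rewrite mul1r Kprod.
rewrite (@master R N p p0 pz (fun=> 1) kn); last 2 first.
- by [].
- by rewrite Ksum.
have -> : (fun x n : {ffun 'I_N -> nat} => ((indiv x 0 * (indiv x 0).-1)%:R
           / (sum_offspring x * (sum_offspring x).-1)%:R : R)%:E)
   = (fun x n => (((indiv x 0 * (indiv x 0).-1)%:R
           / (sum_offspring x * (sum_offspring x).-1)%:R) *
        (\prod_(j < N) indiv n j ^_ ((fun=> 0%N) j))%:R : R)%:E).
  apply: funext => x; apply: funext => n.
  have -> : (\prod_(j < N) indiv n j ^_ 0 = 1)%N by apply: big1 => j _; exact: ffactn0.
  by rewrite mulr1.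
rewrite (@master R N p p0 pz (fun x => (indiv x 0 * (indiv x 0).-1)%:R
           / (sum_offspring x * (sum_offspring x).-1)%:R) (fun=> 0%N)); last 2 first.
- by move=> x; apply: divr_ge0.
- by rewrite big1.
rewrite -esumZr; last 2 first.
- by rewrite invr_ge0.
- by move=> x; rewrite lee_fin; pos.
rewrite -esumZl; last 2 first.
- by [].
- by move=> x; rewrite lee_fin; pos.
apply: eq_esum => x _; rewrite -!EFinM; congr EFin.
have -> : (\prod_(j < N) indiv x j ^_ 0 = 1)%N by apply: big1 => j _; exact: ffactn0.
rewrite big1_eq !ffactn0 !mul1n mulr1 divr1 Ksum mulr1.
have -> : (\prod_(j < N) indiv x j ^_ kn j = (indiv x 0) ^_ 2)%N by apply: Kprod.
have f2 : forall m : nat, (m ^_ 2 = m * m.-1)%N by move=> m; rewrite ffactnS ffactn1.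
rewrite !f2.
have N0 : (N.-1%:R != 0 :> R) by rewrite pnatr_eq0 -lt0n -ltnS prednK // ltnW.
rewrite !natrM.
set iD := (_ * _)^-1.
by field.
Qed.

Section P3.
Variables (R : realType) (N : nat) (p : nat -> R).
Hypothesis law : offspring_law p.

Let p0 : forall m, 0 <= p m. Proof. by case: law. Qed.
Let pz : p 0%N = 0. Proof. by case: law. Qed.
Let p1 : (\esum_(m in [set: nat]) (p m)%:E = 1)%E. Proof. by case: law. Qed.

Lemma probE : prob_ge2 p = (\esum_(m in [set: nat]) (p m * (1 < m)%:R)%:E)%E.
Proof.
rewrite /prob_ge2 esum_mkcond; apply: eq_esum => m _.
case: (boolP (1 < m)%N) => h.
  by rewrite mem_set // mulr1.
by rewrite memNset ?mulr0 //= ltnNge; apply/negP; rewrite -ltnNge.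
Qed.

Lemma prob_fin : exists P : R, [/\ prob_ge2 p = P%:E, 0 <= P & P <= 1].
Proof.
have g0 : (0 <= prob_ge2 p)%E by rewrite probE; apply: esum_ge0 => m _; rewrite lee_fin; apply: mulr_ge0 => //; case: (1 < m)%N.
have g1 : (prob_ge2 p <= 1)%E.
  rewrite probE -p1; apply: le_esum => m _; rewrite lee_fin.
  by case: (1 < m)%N; rewrite ?mulr1 ?mulr0.
have fin : prob_ge2 p \is a fin_num by rewrite ge0_fin_numE // (le_lt_trans g1) ?ltey.
exists (fine (prob_ge2 p)); split; first by rewrite fineK.
  by rewrite -lee_fin fineK.
by rewrite -lee_fin fineK.
Qed.

Lemma marginal (P : R) (i : 'I_N) : prob_ge2 p = P%:E ->
  (\esum_(x in [set: {ffun 'I_N -> nat}]) (w R N p x * (1 < x i)%:R)%:E = P%:E)%E.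
Proof.
move=> HP.
pose a := fun (j : 'I_N) (m : nat) => p m * (if j == i then (1 < m)%:R else 1).
pose s := fun (j : 'I_N) => if j == i then P else 1.
have sP : (\prod_j s j) = P by rewrite /s -big_mkcond /= big_pred1_eq.
rewrite -sP -(@esum_ffun_prod R N a s); last 2 first.
- by move=> j m; rewrite /a; apply: mulr_ge0 => //; case: (j == i) => //; case: (1 < m)%N.
- move=> j; rewrite /a /s; case: (j == i).
    by rewrite -HP probE.
  by under eq_esum do rewrite mulr1; exact: p1.
apply: eq_esum => x _; congr EFin.
rewrite /w /a big_split /=; congr (_ * _).
by rewrite -big_mkcond /= big_pred1_eq.
Qed.


Lemma part3 : (1 < N)%N ->
  ((prob_ge2 p * prob_ge2 p) * ((2 * N)%:R^-1)%:E <= @coal_prob R N p)%E.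
Proof.
move=> N1.
have [P [HP P0 P1]] := prob_fin.
have N0 : (0 < N)%N by apply: ltnW.
pose i0 : 'I_N := Ordinal N0.
rewrite part2 // (@cE_fun R N p p0 pz); last by move=> x; apply: divr_ge0.
have -> : (\esum_(x in [set: {ffun 'I_N -> nat}])
     (w R N p x * ((indiv x 0 * (indiv x 0).-1)%:R / (sum_offspring x * (sum_offspring x).-1)%:R))%:E
   = \esum_(x in [set: {ffun 'I_N -> nat}]) (w R N p x * hh R N x i0)%:E)%E.
  by apply: eq_esum => x _; rewrite /hh -(@indiv_ord N x i0).
rewrite mule_natl.
have -> : ((\esum_(x in [set: {ffun 'I_N -> nat}]) (w R N p x * hh R N x i0)%:E) *+ N
   = \sum_(i < N) \esum_(x in [set: {ffun 'I_N -> nat}]) (w R N p x * hh R N x i)%:E)%E.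
  transitivity (\sum_(i < N) \esum_(x in [set: {ffun 'I_N -> nat}]) (w R N p x * hh R N x i0)%:E)%E.
    by rewrite sumr_const card_ord.
  apply: eq_bigr => i _.
  exact: (@exchange R N p i0 i).
rewrite -esum_sum; last by move=> x i _ _; rewrite lee_fin; apply: mulr_ge0; [exact: w_ge0 | apply: divr_ge0].
pose E := (2 * N * N)%N.
have E0 : (0 < E%:R :> R) by rewrite ltr0n /E !muln_gt0 N0.
apply: (@le_trans _ _ (\esum_(x in [set: {ffun 'I_N -> nat}])
            (w R N p x * ((\sum_i (1 < x i))%:R / E%:R))%:E)); last first.
  apply: le_esum => x _; rewrite sumEFin lee_fin -mulr_sumr.
  case: (boolP (w R N p x == 0)) => [/eqP -> | wx]; first by rewrite !mul0r.
  apply: ler_wpM2l; first exact: w_ge0.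
  have [xpos SN] := @w_supp R N p pz x wx.
  have := @pointwise_nat N x xpos.
  rewrite -/E => H.
  have D0 : (0 < ((sum_offspring x) * (sum_offspring x).-1)%:R :> R).
    by rewrite ltr0n muln_gt0 -subn1 subn_gt0 (leq_trans N1 SN) (leq_trans N0 SN).
  have -> : \sum_i hh R N x i = (\sum_i x i * (x i).-1)%:R / ((sum_offspring x) * (sum_offspring x).-1)%:R.
    by rewrite /hh -mulr_suml natr_sum.
  rewrite ler_pdivrMr // mulrAC ler_pdivlMr // -!natrM ler_nat.
  by rewrite [X in (_ <= X)%N]mulnC.
have -> : (\esum_(x in [set: {ffun 'I_N -> nat}]) (w R N p x * ((\sum_i (1 < x i))%:R / E%:R))%:E
   = \esum_(x in [set: {ffun 'I_N -> nat}]) \sum_(i < N) ((w R N p x * (1 < x i)%:R)%:E * (E%:R^-1)%:E))%E.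
  apply: eq_esum => x _.
  rewrite (eq_bigr (fun i : 'I_N => (w R N p x * (1 < x i)%:R * E%:R^-1)%:E)); last by move=> i _; rewrite EFinM.
  rewrite sumEFin -mulr_suml.
  by rewrite -mulr_sumr natr_sum mulrA.
rewrite esum_sum; last first.
  move=> x i _ _; rewrite -EFinM lee_fin; apply: mulr_ge0; last by rewrite invr_ge0 ltW.
  by apply: mulr_ge0; [exact: w_ge0 | case: (1 < x i)%N].
under eq_bigr => i _.
  rewrite esumZr; last 2 first.
  - by rewrite invr_ge0 ltW.
  - by move=> x; rewrite lee_fin; apply: mulr_ge0; [exact: w_ge0 | case: (1 < x i)%N].
  rewrite (@marginal P i HP) -EFinM.
  over.
rewrite sumEFin sumr_const card_ord HP -!EFinM lee_fin.
have NR : (N%:R != 0 :> R) by rewrite pnatr_eq0 -lt0n.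
have -> : P * E%:R^-1 *+ N = P / (2 * N)%:R.
  by rewrite -mulr_natr /E !natrM; field.
rewrite ler_wpM2r // ?invr_ge0 //; nra.
Qed.
End P3.

Theorem lemma2p2 (R : realType) (N : nat) (p : nat -> R) :
  offspring_law p ->
  (forall (r : nat) (k : 'I_r -> nat),
     (forall j, 2 <= k j)%N -> (\sum_j k j < N)%N ->
     (@cannings_E R N p (fun x n => (\prod_(j < r) (indiv n j) ^_ (k j))%:R%:E)
        * ((N ^_ (\sum_j k j))%:R^-1)%:E
      = @cannings_E R N p (fun x n =>
          ((\prod_(j < r) (indiv x j) ^_ (k j))%:R
           / ((sum_offspring x) ^_ (\sum_j k j))%:R)%:E))%E)
  /\ ((1 < N)%N ->
      @coal_prob R N p
      = (N%:R%:E * @cannings_E R N p (fun x n =>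
          ((indiv x 0 * (indiv x 0).-1)%:R
           / (sum_offspring x * (sum_offspring x).-1)%:R)%:E))%E)
  /\ ((1 < N)%N ->
      ((prob_ge2 p * prob_ge2 p) * ((2 * N)%:R^-1)%:E <= @coal_prob R N p)%E).
Proof.
move=> law; split; first exact: part1.
split; first exact: part2.
exact: part3.
Qed.
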